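(* Let $2\leq d_1\leq d_2$ and let $X$ be a positive semidefinite matrix in $\mathcal{M}_{d_1}\otimes\mathcal{M}_{d_2}$, written as $X=\sum_{i,j=1}^{d_1}\ket{i}\bra{j}\otimes X_{ij}$ with blocks $X_{ij}\in\mathcal{M}_{d_2}$. If $\mathrm{SN}(X)=d_1$, then there exist distinct $k_1,k_2\in\{1,\ldots,d_1\}$ such that \[ Y=\sum_{s,t=1}^{2}\ket{s}\bra{t}\otimes X_{k_sk_t}\in\mathcal{M}_2\otimes\mathcal{M}_{d_2} \] is entangled.
   Context: $\mathcal{M}_d$: complex $d\times d$ matrices. A positive semidefinite $W\in\mathcal{M}_{a}\otimes\mathcal{M}_{b}$ is separable if it is a finite sum $\sum_i P_i\otimes Q_i$ with $P_i,Q_i$ positive semidefinite, and entangled otherwise. The Schmidt rank of $\ket{\psi}$ is the rank of $\mathrm{tr}_A\ket{\psi}\bra{\psi}$; for a nonzero positive semidefinite $W$, $\mathrm{SN}(W)$ is the minimum over decompositions $W=\sum_ip_i\ket{\psi_i}\bra{\psi_i}$ ($p_i>0$) of the maximal Schmidt rank of the $\ket{\psi_i}$. *)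

(* Defs.v *)
From mathcomp Require Import all_boot all_algebra.
From mathcomp Require Import reals.
From mathcomp Require Export complex mxtens.

Set Implicit Arguments.
Unset Strict Implicit.
Unset Printing Implicit Defensive.
Import GRing.Theory Num.Theory.
Local Open Scope ring_scope.

(* Kronecker convention: the basis vector |i> (x) |j> of C^a (x) C^b has
   index  mxtens_index (i, j) = i * b + j  in 'I_(a * b); tensmx is the
   Kronecker product A *t B. *)

Section Defs.
Variable R : realType.
Local Notation C := (R[i]).

Definition adj {m n} (A : 'M[C]_(m, n)) : 'M[C]_(n, m) := (map_mx Num.conj A)^T.

Definition psd {n} (A : 'M[C]_n) : Prop :=
  A = adj A /\ forall v : 'cV[C]_n, 0 <= (adj v *m A *m v) 0 0.

Definition separable {a b} (W : 'M[C]_(a * b)) : Prop :=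
  exists (N : nat) (P : 'I_N -> 'M[C]_a) (Q : 'I_N -> 'M[C]_b),
    (forall i, psd (P i) /\ psd (Q i)) /\ W = \sum_(i < N) tensmx (P i) (Q i).

Definition entangled {a b} (W : 'M[C]_(a * b)) : Prop :=
  psd W /\ ~ separable W.

Definition ptrA {a b} (W : 'M[C]_(a * b)) : 'M[C]_b :=
  \matrix_(k, l) \sum_(i < a) W (mxtens_index (i, k)) (mxtens_index (i, l)).

Definition schmidt_rank {a b} (psi : 'cV[C]_(a * b)) : nat :=
  \rank (@ptrA a b (psi *m adj psi)).

Definition SN_le {a b} (W : 'M[C]_(a * b)) (k : nat) : Prop :=
  exists (N : nat) (p : 'I_N -> C) (psi : 'I_N -> 'cV[C]_(a * b)),
    [/\ forall i, 0 < p i,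
        W = \sum_(i < N) p i *: (psi i *m adj (psi i)) &
        forall i, (@schmidt_rank a b (psi i) <= k)%N].

Definition SN_eq {a b} (W : 'M[C]_(a * b)) (k : nat) : Prop :=
  [/\ W != 0, @SN_le a b W k & forall k', @SN_le a b W k' -> (k <= k')%N].

(* Y = sum_{s,t} |s><t| (x) X_{k_s k_t}, where X_{ij} is the (i,j) block *)
Definition block2 {d1 d2} (X : 'M[C]_(d1 * d2)) (k1 k2 : 'I_d1) : 'M[C]_(2 * d2) :=
  let k (s : 'I_2) := if val s == 0%N then k1 else k2 in
  \matrix_(u, v)
    X (mxtens_index (k (mxtens_unindex u).1, (mxtens_unindex u).2))
      (mxtens_index (k (mxtens_unindex v).1, (mxtens_unindex v).2)).

End Defs.

(* Main.v *)
Require Import Defs.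
From mathcomp Require Import all_boot all_algebra.
From mathcomp Require Import reals.
From mathcomp Require Import spectral sesquilinear zify.
Set Implicit Arguments.
Unset Strict Implicit.
Unset Printing Implicit Defensive.
Import GRing.Theory Num.Theory Num.Def.
Local Open Scope ring_scope.

Section Adj.
Variable R : realType.
Local Notation C := (R[i]).

Lemma hadjE m n (A : 'M[C]_(m, n)) i j : adj A i j = (A j i)^*.
Proof. by rewrite /adj !mxE. Qed.

Lemma hadjK m n (A : 'M[C]_(m, n)) : adj (adj A) = A.
Proof. by apply/matrixP=> i j; rewrite !hadjE conjCK. Qed.

Lemma hadjM m n p (A : 'M[C]_(m, n)) (B : 'M[C]_(n, p)) :
  adj (A *m B) = adj B *m adj A.
Proof.
apply/matrixP=> i j; rewrite hadjE !mxE rmorph_sum; apply: eq_bigr => k _.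
by rewrite ?hadjE rmorphM mulrC.
Qed.

Lemma hadjD m n (A B : 'M[C]_(m, n)) : adj (A + B) = adj A + adj B.
Proof. by apply/matrixP=> i j; rewrite !mxE ?hadjE rmorphD. Qed.

Lemma hadjN m n (A : 'M[C]_(m, n)) : adj (- A) = - adj A.
Proof. by apply/matrixP=> i j; rewrite !mxE ?hadjE rmorphN. Qed.

Lemma hadjB m n (A B : 'M[C]_(m, n)) : adj (A - B) = adj A - adj B.
Proof. by rewrite hadjD hadjN. Qed.

Lemma hadj1 n : adj (1%:M : 'M[C]_n) = 1%:M.
Proof. by apply/matrixP=> i j; rewrite hadjE !mxE eq_sym rmorph_nat. Qed.

Lemma hadj0 m n : adj (0 : 'M[C]_(m, n)) = 0.
Proof. by apply/matrixP=> i j; rewrite hadjE !mxE rmorph0. Qed.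

Lemma hadj_sum m n I (r : seq I) (P : pred I) (F : I -> 'M[C]_(m, n)) :
  adj (\sum_(i <- r | P i) F i) = \sum_(i <- r | P i) adj (F i).
Proof.
apply/matrixP=> i j; rewrite hadjE !summxE rmorph_sum; apply: eq_bigr => k _.
by rewrite hadjE.
Qed.

Lemma hadj_tens m n p q (A : 'M[C]_(m, n)) (B : 'M[C]_(p, q)) :
  adj (A *t B) = adj A *t adj B.
Proof.
apply/matrixP=> i j.
rewrite -(mxtens_unindexK i) -(mxtens_unindexK j).
case: (mxtens_unindex i) => i1 i2; case: (mxtens_unindex j) => j1 j2.
by rewrite hadjE !tensmxE ?hadjE rmorphM.
Qed.

Lemma HHt0 m n (H : 'M[C]_(m, n)) : H *m adj H = 0 -> H = 0.
Proof.
move=> HH; apply/matrixP=> i j; rewrite mxE.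
have := congr1 (fun M : 'M[C]_m => M i i) HH; rewrite !mxE => /eqP.
under eq_bigr do rewrite hadjE -normCK.
rewrite psumr_eq0; last by move=> k _; rewrite exprn_ge0.
move=> /allP /(_ j (mem_index_enum _)) /=.
by rewrite expf_eq0 /= normr_eq0 => /eqP.
Qed.

Lemma hermitian_normal n (A : 'M[C]_n) : A = adj A -> A \is normalmx.
Proof.
move=> hA; apply/normalmxP.
have -> : (A ^t* )%sesqui = adj A by rewrite /adj map_trmx.
by rewrite -hA.
Qed.

Lemma spectral_herm n (A : 'M[C]_n) : A = adj A ->
  exists (P : 'M[C]_n) (d : 'rV[C]_n),
    [/\ P *m adj P = 1%:M, adj P *m P = 1%:M, A = adj P *m diag_mx d *m P
      & diag_mx d = P *m A *m adj P].
Proof.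
move=> hA; have /orthomx_spectralP eA := hermitian_normal hA.
set P := spectralmx A in eA; set d := spectral_diag A in eA.
have uP : P \is unitarymx by apply: spectral_unitarymx.
have aP : adj P = (P ^t* )%sesqui by rewrite /adj map_trmx.
have PPt : P *m adj P = 1%:M by rewrite aP; apply/unitarymxP.
have iP : invmx P = adj P by rewrite aP invmx_unitary.
have PtP : adj P *m P = 1%:M by rewrite -iP mulVmx // unitarymx_unit.
exists P, d; split => //; first by rewrite -iP.
by rewrite eA iP !mulmxA PPt mul1mx -mulmxA PPt mulmx1.
Qed.

Lemma diag_adj n (d : 'rV[C]_n) : adj (diag_mx d) = diag_mx (map_mx conjC d).
Proof.
apply/matrixP=> i j; rewrite hadjE !mxE rmorphMn.
by case: eqP => [->|/eqP ne]; rewrite ?eqxx // eq_sym (negbTE ne).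
Qed.

Lemma psd_decomp n (A : 'M[C]_n) : psd A -> exists W : 'M[C]_n, A = W *m adj W.
Proof.
move=> [hA pA]; have [P [d [PPt PtP eA eD]]] := spectral_herm hA.
have d_ge0 : forall j, 0 <= d 0 j.
  move=> j; have := pA (col j (adj P)).
  have -> : adj (col j (adj P)) = row j P.
    by apply/matrixP=> a b; rewrite /adj !mxE conjCK.
  have -> : (row j P *m A *m col j (adj P)) 0 0 = (diag_mx d) j j.
    rewrite eD !mxE; apply: eq_bigr => k _; rewrite !mxE; congr (_ * _).
    by apply: eq_bigr => l _; rewrite !mxE.
  by rewrite mxE eqxx mulr1n.
exists (adj P *m diag_mx (\row_j sqrtC (d 0 j))).
rewrite hadjM hadjK diag_adj !mulmxA -[adj P *m _ *m _]mulmxA mulmx_diag.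
rewrite eA; congr (_ *m _ *m _); congr diag_mx; apply/rowP=> j; rewrite !mxE.
have s0 : 0 <= sqrtC (d 0 j) by rewrite sqrtC_ge0.
by rewrite (CrealP (ger0_real s0)) -expr2 sqrtCK.
Qed.

Lemma conj_diag_mul n (P : 'M[C]_n) (a b : 'rV[C]_n) : P *m adj P = 1%:M ->
  (adj P *m diag_mx a *m P) *m (adj P *m diag_mx b *m P) =
  adj P *m diag_mx (\row_j (a 0 j * b 0 j)) *m P.
Proof.
move=> PPt; rewrite !mulmxA -[adj P *m diag_mx a *m P *m adj P]mulmxA PPt mulmx1.
by rewrite -[adj P *m diag_mx a *m diag_mx b]mulmxA mulmx_diag.
Qed.

Lemma pinv_exists n (Y : 'M[C]_n) : Y = adj Y ->
  exists Yp : 'M[C]_n, [/\ adj Yp = Yp, Y *m Yp *m Y = Y & Yp *m Y *m Yp = Yp].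
Proof.
move=> hY; have [P [d [PPt PtP eA eD]]] := spectral_herm hY.
have dreal : forall j, (d 0 j)^* = d 0 j.
  move=> j; have : adj (diag_mx d) = diag_mx d by rewrite eD !hadjM hadjK -hY mulmxA.
  by move=> /matrixP /(_ j j); rewrite hadjE !mxE eqxx mulr1n.
exists (adj P *m diag_mx (\row_j (d 0 j)^-1) *m P); split.
- rewrite !hadjM hadjK diag_adj mulmxA; congr (_ *m _ *m _); congr diag_mx.
  by apply/rowP=> j; rewrite !mxE fmorphV; congr (_^-1); apply: dreal.
- rewrite eA !conj_diag_mul //; congr (_ *m diag_mx _ *m _); apply/rowP=> j; rewrite !mxE.
  by have [->|dn0] := eqVneq (d 0 j) 0; rewrite ?mul0r // mulfV // mul1r.
- rewrite eA !conj_diag_mul //; congr (_ *m diag_mx _ *m _); apply/rowP=> j; rewrite !mxE.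
  by have [->|dn0] := eqVneq (d 0 j) 0; rewrite ?invr0 ?mul0r // mulVf // mul1r.
Qed.

Lemma psd_ker n p (X : 'M[C]_n) (M : 'M[C]_(n, p)) : psd X ->
  adj M *m X *m M = 0 -> X *m M = 0.
Proof.
move=> /psd_decomp [W ->] h.
have : (adj M *m W) *m adj (adj M *m W) = 0 by rewrite hadjM hadjK !mulmxA; rewrite !mulmxA in h.
move=> /HHt0 h0; have : adj (adj M *m W) = 0 by rewrite h0 hadj0.
by rewrite hadjM hadjK -mulmxA => ->; rewrite mulmx0.
Qed.

Lemma psd_congr n p (X : 'M[C]_n) (N : 'M[C]_(n, p)) : psd X ->
  psd (adj N *m X *m N).
Proof.
move=> [hX pX]; split; first by rewrite !hadjM hadjK -hX mulmxA.
move=> v; have -> : adj v *m (adj N *m X *m N) *m v = adj (N *m v) *m X *m (N *m v) by rewrite hadjM !mulmxA.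
exact: pX.
Qed.

End Adj.
Section Cone.
Variable R : realType.
Local Notation C := (R[i]).
Variables a b : nat.

Lemma SN_le0 k : SN_le (0 : 'M[C]_(a * b)) k.
Proof.
exists 0%N, (fun _ => 1), (fun _ => 0); split; [by case | by rewrite big_ord0 | by case].
Qed.

Lemma SN_leD k (A B : 'M[C]_(a * b)) : SN_le A k -> SN_le B k -> SN_le (A + B) k.
Proof.
move=> [N [p [psi [p0 eA sr]]]] [N' [p' [psi' [p0' eB sr']]]].
exists (N + N')%N, (fun i => match split i with inl j => p j | inr j => p' j end),
  (fun i => match split i with inl j => psi j | inr j => psi' j end); split.
- by move=> i; case: (split i).
- rewrite big_split_ord /= eA eB; congr (_ + _); apply: eq_bigr => i _.
    by rewrite (unsplitK (inl i)).
  by rewrite (unsplitK (inr i)).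
- by move=> i; case: (split i).
Qed.

Lemma SN_le_sum k (I : Type) (r : seq I) (P : pred I) (F : I -> 'M[C]_(a * b)) :
  (forall i, P i -> SN_le (F i) k) -> SN_le (\sum_(i <- r | P i) F i) k.
Proof.
move=> h; apply: (big_ind (fun A => SN_le A k)) => //.
- exact: SN_le0.
- exact: SN_leD.
Qed.

Lemma SN_le1 k (psi : 'cV[C]_(a * b)) : (schmidt_rank psi <= k)%N ->
  SN_le (psi *m adj psi) k.
Proof.
move=> sr; exists 1%N, (fun _ => 1), (fun _ => psi); split => //.
by rewrite big_ord1 scale1r.
Qed.

Lemma mul_adj_cols m n (H : 'M[C]_(m, n)) :
  H *m adj H = \sum_(j < n) col j H *m adj (col j H).
Proof.
apply/matrixP=> x y; rewrite mxE summxE; apply: eq_bigr => j _.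
by rewrite !mxE big_ord1 !mxE.
Qed.

Lemma SN_le_cols k n (H : 'M[C]_(a * b, n)) :
  (forall j, (schmidt_rank (col j H) <= k)%N) -> SN_le (H *m adj H) k.
Proof.
move=> h; rewrite mul_adj_cols; apply: SN_le_sum => j _; exact: SN_le1.
Qed.

Definition coefmx (psi : 'cV[C]_(a * b)) : 'M[C]_(a, b) :=
  \matrix_(i, l) psi (mxtens_index (i, l)) 0.

Lemma ptrA_coef (psi : 'cV[C]_(a * b)) :
  ptrA (psi *m adj psi) = (coefmx psi)^T *m map_mx conjC (coefmx psi).
Proof.
apply/matrixP=> k l; rewrite !mxE; apply: eq_bigr => i _.
by rewrite !mxE big_ord1 !mxE.
Qed.

Lemma SR_le_ker (psi : 'cV[C]_(a * b)) (c : 'rV[C]_a) :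
  c != 0 -> c *m coefmx psi = 0 -> (schmidt_rank psi <= a.-1)%N.
Proof.
move=> c0 cM; rewrite /schmidt_rank ptrA_coef.
apply: leq_trans (mxrankM_maxl _ _) _; rewrite mxrank_tr.
have : (c <= kermx (coefmx psi))%MS by apply/sub_kermxP.
move=> /mxrankS; rewrite rank_rV c0 mxrank_ker => h.
have := rank_leq_row (coefmx psi).
move: h; set r := \rank _; lia.
Qed.

End Cone.
Section Ident.
Variable R : realType.
Local Notation C := (R[i]).
Variables n m : nat.
Variables (X : 'M[C]_n) (E : 'M[C]_(n, m)) (Yp Y : 'M[C]_m).
Hypotheses (hX : adj X = X) (hYp : adj Yp = Yp) (EtE : adj E *m E = 1%:M)
  (eqY : Y = adj E *m X *m E)
  (key1 : X *m E *m Yp *m Y = X *m E) (YpYYp : Yp *m Y *m Yp = Yp).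

Lemma ident :
  let Qm : 'M[C]_n := 1%:M - E *m adj E in
  let T : 'M[C]_(n, m) := Qm *m X *m E *m Yp in
  let Nt : 'M[C]_n := Qm *m (1%:M - X *m E *m Yp *m adj E) in
  X = (E + T) *m Y *m adj (E + T) + Nt *m X *m adj Nt.
Proof.
move=> Qm T Nt.
have hY : adj Y = Y by rewrite eqY !hadjM hadjK hX mulmxA.
have key1' : Y *m Yp *m adj E *m X = adj E *m X.
  by have := congr1 (@adj R _ _) key1; rewrite !hadjM hX hY hYp !mulmxA.
have hQ : adj Qm = Qm by rewrite /Qm hadjB hadj1 hadjM hadjK.
pose P := E *m adj E.
pose U := X *m E *m Yp *m adj E *m X.
have t1 : P *m U = P *m X.
  rewrite /P /U -!mulmxA; congr (E *m _).
  by rewrite !mulmxA -eqY key1'.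
have t2 : Qm *m (X - U) = X - U.
  by rewrite /Qm mulmxBl mul1mx -/P mulmxBr t1 subrr subr0.
have s1 : (E + T) *m Y = X *m E.
  rewrite mulmxDl.
  have -> : T *m Y = Qm *m (X *m E).
    rewrite /T. rewrite -key1. rewrite !mulmxA. done.
  rewrite /Qm mulmxBl mul1mx.
  rewrite eqY !mulmxA.
  by rewrite addrC subrK.
have aT : adj (E + T) = adj E + Yp *m adj E *m X *m Qm.
  rewrite hadjD /T. rewrite !hadjM. rewrite hQ hX hYp. rewrite !mulmxA. done.
have s2 : (E + T) *m Y *m adj (E + T) = X *m P + U *m Qm.
  rewrite s1 aT. rewrite mulmxDr. rewrite /U /P. rewrite !mulmxA. done.
have aNt : adj Nt = (1%:M - E *m Yp *m adj E *m X) *m Qm.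
  rewrite /Nt hadjM hQ hadjB hadj1 !hadjM hX hYp hadjK. rewrite !mulmxA. done.
have s3 : (1%:M - X *m E *m Yp *m adj E) *m X *m (1%:M - E *m Yp *m adj E *m X) = X - U.
  have UB : U *m (E *m Yp *m adj E *m X) = U.
    rewrite /U !mulmxA.
    have -> : X *m E *m Yp *m adj E *m X *m E *m Yp = X *m E *m (Yp *m Y *m Yp).
      rewrite eqY !mulmxA. done.
    rewrite YpYYp. done.
  have XB : X *m (E *m Yp *m adj E *m X) = U.
    rewrite /U !mulmxA. done.
  rewrite mulmxBl mul1mx mulmxBr mulmx1 mulmxBl.
  rewrite -/U XB UB subrr subr0. done.
have s4 : Nt *m X *m adj Nt = (X - U) *m Qm.
  rewrite aNt /Nt -t2 -s3 !mulmxA. done.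
rewrite s2 s4 -addrA -mulmxDl [U + _]addrC subrK -mulmxDr /Qm -/P [P + _]addrC subrK mulmx1.
done.
Qed.
End Ident.
Section Emb.
Variable R : realType.
Local Notation C := (R[i]).
Variables d1 d2 : nat.
Variables k1 k2 : 'I_d1.
Hypothesis k12 : k1 != k2.

Definition kk (s : 'I_2) : 'I_d1 := if val s == 0%N then k1 else k2.

Lemma kk_inj : injective kk.
Proof.
move=> s t; rewrite /kk; apply: contra_eq => st.
have s2 : (val s < 2)%N := ltn_ord s; have t2 : (val t < 2)%N := ltn_ord t.
have nst : val s != val t by [].
have k21 : k2 != k1 by rewrite eq_sym.
have [hs|hs] := eqVneq (val s) 0%N; have [ht|ht] := eqVneq (val t) 0%N;
  rewrite ?hs ?ht ?(negbTE hs) ?(negbTE ht) //.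
- by move: nst; rewrite hs ht.
- by exfalso; move/eqP: nst; move/eqP: hs; move/eqP: ht; lia.
Qed.

Definition zz (v : 'I_(2 * d2)) : 'I_(d1 * d2) :=
  mxtens_index (kk (mxtens_unindex v).1, (mxtens_unindex v).2).

Lemma zz_inj : injective zz.
Proof.
move=> u v h; apply: (can_inj (@mxtens_unindexK 2 d2)).
move: h => /(congr1 (@mxtens_unindex d1 d2)); rewrite /zz !mxtens_indexK.
by case: (mxtens_unindex u) => a b; case: (mxtens_unindex v) => c e [/kk_inj -> ->].
Qed.

Lemma zzE s l : zz (mxtens_index (s, l)) = mxtens_index (kk s, l).
Proof. by rewrite /zz mxtens_indexK. Qed.

Definition Emb : 'M[C]_(d1 * d2, 2 * d2) := \matrix_(x, v) (x == zz v)%:R.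

Lemma sum_delta n (f : 'I_n -> C) k : \sum_i (i == k)%:R * f i = f k.
Proof.
rewrite (bigD1 k) //= eqxx mul1r big1 ?addr0 // => i /negbTE ->; by rewrite mul0r.
Qed.

Lemma mulEmb m (A : 'M[C]_(m, d1 * d2)) y v : (A *m Emb) y v = A y (zz v).
Proof.
rewrite mxE -[RHS](sum_delta (fun x => A y x) (zz v)).
by apply: eq_bigr => x _; rewrite mxE mulrC.
Qed.

Lemma adjEmb_mul m (A : 'M[C]_(d1 * d2, m)) u y : (adj Emb *m A) u y = A (zz u) y.
Proof.
rewrite mxE -[RHS](sum_delta (fun x => A x y) (zz u)).
by apply: eq_bigr => x _; rewrite /adj !mxE rmorph_nat.
Qed.

Lemma EtE : adj Emb *m Emb = 1%:M.
Proof.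
apply/matrixP=> u v; rewrite adjEmb_mul !mxE.
by rewrite (inj_eq zz_inj).
Qed.

Lemma Emb_mul m (g : 'M[C]_(2 * d2, m)) u j : (Emb *m g) (zz u) j = g u j.
Proof.
rewrite mxE -[RHS](sum_delta (fun v => g v j) u).
by apply: eq_bigr => v _; rewrite mxE (inj_eq zz_inj) eq_sym.
Qed.

Definition Qp : 'M[C]_(d1 * d2) := 1%:M - Emb *m adj Emb.

Lemma Qp_mul m (M : 'M[C]_(d1 * d2, m)) u j : (Qp *m M) (zz u) j = 0.
Proof.
rewrite /Qp mulmxBl mul1mx -mulmxA.
have -> : (M - Emb *m (adj Emb *m M)) (zz u) j = M (zz u) j - (Emb *m (adj Emb *m M)) (zz u) j.
  by rewrite [LHS]mxE [X in _ + X]mxE.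
by rewrite Emb_mul adjEmb_mul subrr.
Qed.

Lemma block2E (X : 'M[C]_(d1 * d2)) : block2 X k1 k2 = adj Emb *m X *m Emb.
Proof.
by apply/matrixP=> u v; rewrite mulEmb adjEmb_mul mxE.
Qed.


Lemma SR_prod (psi : 'cV[C]_(d1 * d2)) (al : 'I_2 -> C) (be : 'I_d2 -> C) :
  (forall s l, psi (mxtens_index (kk s, l)) 0 = al s * be l) ->
  (schmidt_rank psi <= d1.-1)%N.
Proof.
move=> h.
have h1 : forall l, psi (mxtens_index (k1, l)) 0 = al ord0 * be l.
  by move=> l; rewrite -h.
have h2 : forall l, psi (mxtens_index (k2, l)) 0 = al ord_max * be l.
  by move=> l; rewrite -h.
pose c (x y : C) : 'rV[C]_d1 := \row_i ((i == k1)%:R * x - (i == k2)%:R * y).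
have cM : forall x y, c x y *m coefmx psi = \row_l (x * psi (mxtens_index (k1, l)) 0 - y * psi (mxtens_index (k2, l)) 0).
  move=> x y; apply/rowP => l; rewrite !mxE.
  under eq_bigr do rewrite !mxE mulrBl -!mulrA.
  by rewrite sumrB !(sum_delta (fun i => _ * psi (mxtens_index (i, l)) 0)).
have [a0|a0] := eqVneq (al ord0) 0.
- apply: (@SR_le_ker _ _ _ psi (c 1 0)).
    apply/eqP => /rowP /(_ k1); rewrite !mxE eqxx (negbTE k12) mul1r mul0r subr0 => /eqP.
    by rewrite oner_eq0.
  rewrite cM; apply/rowP => l; rewrite !mxE h1 a0 !mul0r mul1r subr0.
  done.
- apply: (@SR_le_ker _ _ _ psi (c (al ord_max) (al ord0))).
    apply/eqP => /rowP /(_ k2); rewrite !mxE eqxx eq_sym (negbTE k12) mul0r sub0r mul1r => /eqP.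
    by rewrite oppr_eq0 (negbTE a0).
  rewrite cM; apply/rowP => l; rewrite !mxE h1 h2 mulrCA subrr.
  done.
Qed.

Lemma main_SN (X : 'M[C]_(d1 * d2)) : psd X ->
  separable (adj Emb *m X *m Emb) -> SN_le X d1.-1.
Proof.
move=> pX [N [P [Q [PQ eY]]]].
have hX : adj X = X by rewrite -pX.1.
have hY0 := psd_congr Emb pX.
set Y := adj Emb *m X *m Emb in hY0 *.
have [Yp [hYp YYpY YpYYp]] := pinv_exists hY0.1.
have key1 : X *m Emb *m Yp *m Y = X *m Emb.
  have h0 : adj (Emb *m (1%:M - Yp *m Y)) *m X *m
            (Emb *m (1%:M - Yp *m Y)) = 0.
    rewrite hadjM.
    have -> : forall (K : 'M[C]_(2 * d2)), adj K *m adj Emb *m X *m (Emb *m K) =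
        adj K *m (Y *m K).
      move=> K; rewrite /Y !mulmxA. done.
    rewrite mulmxBr mulmx1 [Y *m (Yp *m Y)]mulmxA YYpY subrr mulmx0. done.
  have := psd_ker pX h0.
  rewrite mulmxBr mulmx1 mulmxBr => /subr0_eq e; rewrite !mulmxA in e.
  apply: esym; rewrite {1}e /Y !mulmxA. done.
have id := ident hX hYp (erefl _) key1 YpYYp.
rewrite id; apply: SN_leD.
- rewrite /Y eY mulmx_sumr mulmx_suml; apply: SN_le_sum => i _.
  have [A eA] := psd_decomp (PQ i).1; have [B eB] := psd_decomp (PQ i).2.
  have -> : P i *t Q i = (A *t B) *m adj (A *t B).
    rewrite hadj_tens tensmx_mul -eA -eB. done.
  set M := (Emb + _).
  have -> : M *m ((A *t B) *m adj (A *t B)) *m adj M = (M *m (A *t B)) *m adj (M *m (A *t B)).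
    rewrite hadjM !mulmxA. done.
  apply: SN_le_cols => j.
  apply: (@SR_prod _ (fun s => A s (mxtens_unindex j).1) (fun l => B l (mxtens_unindex j).2)).
  move=> s l; rewrite mxE -zzE /M mulmxDl.
  have -> : (1%:M - Emb *m adj Emb) *m X *m Emb *m Yp *m (A *t B) = Qp *m (X *m Emb *m Yp *m (A *t B)).
    rewrite /Qp !mulmxA. done.
  rewrite [LHS]mxE Emb_mul Qp_mul addr0.
  rewrite -{1}(mxtens_unindexK j); case: (mxtens_unindex j) => j1 j2.
  rewrite tensmxE. done.
- have [W eW] := psd_decomp pX.
  set K := (_ *m (1%:M - _)).
  have -> : K *m X *m adj K = (K *m W) *m adj (K *m W).
    rewrite [in RHS]hadjM {1}eW !mulmxA. done.
  apply: SN_le_cols => j.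
  apply: (@SR_prod _ (fun _ => 0) (fun _ => 0)).
  move=> s l; rewrite mxE -zzE /K -mulmxA Qp_mul mul0r. done.
Qed.

End Emb.

Theorem corollary19 (R : realType) (d1 d2 : nat) (X : 'M[R[i]]_(d1 * d2)) :
  (2 <= d1)%N -> (d1 <= d2)%N ->
  psd X -> SN_eq X d1 ->
  exists k1 k2 : 'I_d1, k1 != k2 /\ entangled (block2 X k1 k2).
Proof.
move=> h2 h12 pX [Xn0 _ hmin].
have h0 : (0 < d1)%N by lia.
pose k1 : 'I_d1 := Ordinal h0.
pose k2 : 'I_d1 := Ordinal h2.
have k12 : k1 != k2 by [].
exists k1, k2; split => //; split.
- rewrite block2E; exact: psd_congr.
- move=> sep.
  have sep' : separable (adj (Emb R d2 k1 k2) *m X *m Emb R d2 k1 k2) by rewrite -block2E.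
  have := hmin _ (main_SN k12 pX sep').
  lia.
Qed.
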